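(* Let $M,N,Q$ be positive integers with $M\ge 2N$, let $S=\{\vec b\in\mathbb{F}_2^M: H(\vec b)=N\}$, and let $\mathbf{G}\in\mathbb{F}_2^{Q\times M}$ be such that the map $\vec b\mapsto\mathbf{G}\vec b$ (over $\mathbb{F}_2$) is injective on $S$. Then every nonzero $\vec k\in\ker\mathbf{G}$ whose Hamming weight $H(\vec k)$ is even satisfies $H(\vec k)\ge 2N+2$.
   Context: $H(\vec v)$ denotes the Hamming weight (number of nonzero entries) of a binary vector $\vec v$; $\ker\mathbf{G}=\{\vec k\in\mathbb{F}_2^M:\mathbf{G}\vec k=\vec 0\}$. A matrix $\mathbf{G}$ injective on $S$ is called a number-conserving linear encoding of $M$ fermionic modes with $N$ particles. *)

(* Defs.v *)
From mathcomp Require Import all_boot all_order all_algebra.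
Set Implicit Arguments. Unset Strict Implicit. Unset Printing Implicit Defensive.
Import GRing.Theory.
Local Open Scope ring_scope.

Definition hweight (M : nat) (v : 'cV['F_2]_M) : nat :=
  #|[set i : 'I_M | v i 0 != 0]|.

Definition weightN (M N : nat) : {set 'cV['F_2]_M} :=
  [set b | hweight b == N].

Definition injective_on_S (Q M : nat) (N : nat) (G : 'M['F_2]_(Q, M)) : Prop :=
  {in weightN M N &, injective (fun b : 'cV['F_2]_M => G *m b)}.

(* Main.v *)
Require Import Defs.
From mathcomp Require Import all_boot all_order all_algebra.
Local Open Scope ring_scope.
Import GRing.Theory.
From mathcomp Require Import zify.
Set Implicit Arguments. Unset Strict Implicit.

Lemma sub_card (T : finType) (B : {set T}) n : (n <= #|B|)%N ->
  exists A : {set T}, A \subset B /\ #|A| = n.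
Proof.
move=> hn; exists [set x in take n (enum B)]; split.
  by apply/subsetP => x; rewrite inE => /mem_take; rewrite mem_enum.
rewrite cardsE; move/card_uniqP: (take_uniq n (enum_uniq (mem B))) => ->.
by rewrite size_take -cardE; case: ltngtP hn => // ->.
Qed.

Lemma F2_cases (x : 'F_2) : x = 0 \/ x = 1.
Proof. case: x => [[|[|n]] Hn]; [left|right|]; try exact: val_inj. by []. Qed.

Definition vecs M (X : {set 'I_M}) : 'cV['F_2]_M := \col_(i < M) ((i \in X)%:R : 'F_2).

Lemma hweight_vecs M (X : {set 'I_M}) : hweight (vecs X) = #|X|.
Proof. rewrite /hweight; apply: eq_card => i; rewrite !inE !mxE; by case: (i \in X). Qed.

Lemma disj_card (T : finType) (K X C : {set T}) : X \subset K -> C \subset ~: K ->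
  #|X :|: C| = (#|X| + #|C|)%N.
Proof.
move=> sX sC; rewrite -cardsUI.
suff -> : X :&: C = set0 by rewrite cards0 addn0.
apply/setP => i; rewrite !inE; apply/negP => /andP [hX hC].
by move: (subsetP sX i hX) (subsetP sC i hC); rewrite inE => ->.
Qed.

Theorem lemma1 (M N Q : nat) (G : 'M['F_2]_(Q, M)) :
  (0 < M)%N -> (0 < N)%N -> (0 < Q)%N -> (2 * N <= M)%N ->
  injective_on_S N G ->
  forall k : 'cV['F_2]_M, G *m k = 0 -> k != 0 -> ~~ odd (hweight k) ->
  (2 * N + 2 <= hweight k)%N.
Proof.
move=> _ _ _ hNM hinj k hk hk0 hev.
rewrite leqNgt; apply/negP => hlt.
set K := [set i : 'I_M | k i 0 != 0].
have hwK : hweight k = #|K| by [].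
rewrite hwK in hev hlt.
have hw2 : #|K| = (#|K|./2).*2 by rewrite -{1}(odd_double_half #|K|) (negbTE hev).
set h := #|K|./2 in hw2.
have hhN : (h <= N)%N by move: hlt hw2; rewrite -mul2n; lia.
have [A [sAK cA]] : exists A : {set 'I_M}, A \subset K /\ #|A| = h.
  have hhK : (h <= #|K|)%N by move: hw2; rewrite -mul2n; lia.
  by apply: sub_card; exact: hhK.
have [C [sCK cC]] : exists C : {set 'I_M}, C \subset ~: K /\ #|C| = (N - h)%N.
  apply: sub_card; rewrite cardsCs setCK card_ord.
  move: hNM hhN; rewrite hw2 -mul2n; lia.
have sDK : K :\: A \subset K by apply: subsetDl.
have cD : #|K :\: A| = h.
  rewrite cardsD (setIidPr sAK) cA; move: hw2; rewrite -mul2n; lia.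
set b1 := vecs (A :|: C).
set b2 := vecs ((K :\: A) :|: C).
have e : b1 = b2 + k.
  apply/matrixP => i j; rewrite ord1 !mxE !inE.
  move: (subsetP sAK i) (subsetP sCK i); rewrite !inE.
  case: (F2_cases (k i 0)) => ->; case: (i \in A); case: (i \in C) => //= H1 H2;
    try (by have := H1 erefl); try (by have := H2 erefl); by apply: val_inj.
have w1 : b1 \in weightN M N.
  by rewrite inE hweight_vecs (disj_card sAK sCK) cA cC; apply/eqP; lia.
have w2 : b2 \in weightN M N.
  by rewrite inE hweight_vecs (disj_card sDK sCK) cD cC; apply/eqP; lia.
have := hinj _ _ w1 w2.
rewrite /= e mulmxDr hk addr0 => /(_ erefl) /eqP.
by rewrite -subr_eq0 addrC addKr (negbTE hk0).
Qed.
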